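(* Let $Y$ and $W$ be nonempty finite posets and let $n\ge 2$. There is a bijection between \[ O_{\mu(Y,W),n}\ \sqcup\ \bigsqcup_{\substack{a+b=n-1\\ a,b\ge 1}} O_{Y,a}\times O_{W,b} \qquad\text{and}\qquad \bigsqcup_{\substack{c+d=n\\ c,d\ge 1}} O_{Y,c}\times O_{W,d}. \] In particular $\Omega(\mu(Y,W),n)+\sum_{a+b=n-1}\Omega(Y,a)\Omega(W,b)=\sum_{c+d=n}\Omega(Y,c)\Omega(W,d)$.
   Context: For $n\ge1$, $\langle n\rangle$ denotes the chain $1<2<\dots<n$. For a finite poset $X$, $O_{X,n}$ is the set of strict order preserving maps $f:X\to\langle n\rangle$ (i.e. $u<v$ in $X$ implies $f(u)<f(v)$), and $\Omega(X,n)=|O_{X,n}|$. For finite posets $Y,W$, the concatenation $\mu(Y,W)$ is the poset on the disjoint union of $Y$ and $W$, keeping the orders of $Y$ and $W$, and additionally declaring every element of $Y$ smaller than every element of $W$. *)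

(* Defs.v *)
From mathcomp Require Import all_boot all_order.
Set Implicit Arguments. Unset Strict Implicit. Unset Printing Implicit Defensive.

Definition is_poset (X : finType) (le : rel X) : Prop :=
  reflexive le /\ antisymmetric le /\ transitive le.

Definition slt (X : finType) (le : rel X) : rel X := fun u v => le u v && (u != v).

(* The chain <n> = 1 < 2 < ... < n is represented by 'I_n (values 0..n-1),
   with the usual order; this is an order isomorphism. *)
Definition strict_pres (X : finType) (le : rel X) (n : nat) (f : {ffun X -> 'I_n}) : bool :=
  [forall u, forall v, slt le u v ==> (f u < f v)].

Definition O (X : finType) (le : rel X) (n : nat) : Type :=
  {f : {ffun X -> 'I_n} | strict_pres le f}.

Definition Omega (X : finType) (le : rel X) (n : nat) : nat :=
  #|[set f : {ffun X -> 'I_n} | strict_pres le f]|.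

Definition mu (Y W : finType) (leY : rel Y) (leW : rel W) : rel (Y + W)%type :=
  fun x y => match x, y with
             | inl a, inl b => leY a b
             | inr a, inr b => leW a b
             | inl _, inr _ => true
             | inr _, inl _ => false
             end.

Definition split_index (m : nat) : Type :=
  {ab : nat * nat | (0 < ab.1) && (0 < ab.2) && (ab.1 + ab.2 == m)}.

Definition split_union (Y W : finType) (leY : rel Y) (leW : rel W) (m : nat) : Type :=
  {s : split_index m & (O leY (sval s).1 * O leW (sval s).2)%type}.

(* Main.v *)
Require Import Defs.
From mathcomp Require Import all_boot all_order.
From mathcomp Require Import zify.
Set Implicit Arguments. Unset Strict Implicit. Unset Printing Implicit Defensive.

Lemma spP (X : finType) (le : rel X) n (f : {ffun X -> 'I_n}) :
  reflect (forall u v, slt le u v -> f u < f v) (strict_pres le f).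
Proof.
apply: (iffP forallP) => H.
  by move=> u v; move/forallP: (H u) => /(_ v) /implyP.
by move=> u; apply/forallP=> v; apply/implyP; exact: H.
Qed.

Lemma spE (X : finType) (le : rel X) n (f : {ffun X -> 'I_n}) u v :
  strict_pres le f -> slt le u v -> f u < f v.
Proof. by move/spP; apply. Qed.

Lemma O_pos (X : finType) (x0 : X) (le : rel X) n (g : O le n) : 0 < n.
Proof. by case: (sval g x0) => k /=; case: n {g}. Qed.

Section Bij.
Variables (Y W : finType) (leY : rel Y) (leW : rel W) (y0 : Y) (w0 : W).
Local Notation M := (mu leY leW).

Lemma slt_ll a b : slt M (inl a) (inl b) = slt leY a b.
Proof. by []. Qed.
Lemma slt_rr a b : slt M (inr a) (inr b) = slt leW a b.
Proof. by []. Qed.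
Lemma slt_lr a b : slt M (inl a) (inr b) = true.
Proof. by []. Qed.
Lemma slt_rl a b : slt M (inr a) (inl b) = false.
Proof. by []. Qed.

Lemma su_eq m (s1 s2 : split_union leY leW m) :
  sval (tag s1) = sval (tag s2) ->
  (forall y, val (sval (tagged s1).1 y) = val (sval (tagged s2).1 y)) ->
  (forall w, val (sval (tagged s1).2 w) = val (sval (tagged s2).2 w)) -> s1 = s2.
Proof.
case: s1 => [[[a b] Hab] [[g Hg] [h Hh]]]; case: s2 => [[[a' b'] Hab'] [[g' Hg'] [h' Hh']]] /= [ea eb].
subst a' b'; rewrite (bool_irrelevance Hab' Hab) => eg eh.
have eg' : g = g' by apply/ffunP => y; apply/val_inj; exact: eg.
have eh' : h = h' by apply/ffunP => y; apply/val_inj; exact: eh.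
subst g' h'; by rewrite (bool_irrelevance Hg' Hg) (bool_irrelevance Hh' Hh).
Qed.

Lemma O_eq (X : finType) (le : rel X) n (f1 f2 : O le n) :
  (forall x, val (sval f1 x) = val (sval f2 x)) -> f1 = f2.
Proof.
move=> e; apply/val_inj/ffunP => x; apply/val_inj; exact: e.
Qed.

Variables (N : nat) (HN : 0 < N).

Definition kmax (f : O M N) : nat := \big[maxn/0]_(y : Y) val (sval f (inl y)).
Lemma kmax_ge (f : O M N) (y : Y) : val (sval f (inl y)) <= kmax f.
Proof. rewrite /kmax; exact: (@leq_bigmax Y (fun y : Y => val (sval f (inl y))) y). Qed.
Lemma kmax_att (f : O M N) : exists y, val (sval f (inl y)) = kmax f.
Proof.
have hY : 0 < #|Y| by apply/card_gt0P; exists y0.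
rewrite /kmax.
have [y ->] := @eq_bigmax Y (fun y => val (sval f (inl y))) hY.
by exists y.
Qed.
Lemma kmax_lt (f : O M N) (w : W) : kmax f < val (sval f (inr w)).
Proof. have [y <-] := kmax_att f; exact: (spE (svalP f) (u:=inl y) (v:=inr w)). Qed.
Lemma kmax_ltN (f : O M N) : (kmax f).+1 < N.
Proof. exact: leq_ltn_trans (kmax_lt f w0) (ltn_ord _). Qed.

Definition F1g (f : O M N) : {ffun Y -> 'I_(kmax f).+1} :=
  [ffun y => inord (sval f (inl y))].
Lemma F1g_val (f : O M N) (y : Y) : val (F1g f y) = sval f (inl y).
Proof. by rewrite ffunE /= inordK // ltnS kmax_ge. Qed.
Lemma F1g_pres (f : O M N) : strict_pres leY (F1g f).
Proof.
apply/spP => u v H; rewrite !F1g_val; exact: (spE (svalP f) (u:=inl u) (v:=inl v)).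
Qed.

Lemma F1h_lt (f : O M N) (w : W) : val (sval f (inr w)) - (kmax f).+1 < N - (kmax f).+1.
Proof. have := kmax_lt f w; have := ltn_ord (sval f (inr w)); rewrite /=; lia. Qed.
Definition F1h (f : O M N) : {ffun W -> 'I_(N - (kmax f).+1)} :=
  [ffun w => Ordinal (F1h_lt f w)].
Lemma F1h_val (f : O M N) w : val (F1h f w) = val (sval f (inr w)) - (kmax f).+1.
Proof. by rewrite ffunE. Qed.
Lemma F1h_pres (f : O M N) : strict_pres leW (F1h f).
Proof.
apply/spP => u v H; rewrite !F1h_val.
have := kmax_lt f u; have := (spE (u:=inr u) (v:=inr v) (svalP f) H); rewrite /=; lia.
Qed.
Lemma F1_idx (f : O M N) : (0 < (kmax f).+1) && (0 < N - (kmax f).+1) && ((kmax f).+1 + (N - (kmax f).+1) == N).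
Proof. have := kmax_ltN f; rewrite /= => ?; apply/andP; split; [|apply/eqP]; lia. Qed.
Definition F1 (f : O M N) : split_union leY leW N :=
  existT (fun s : split_index N => (O leY (sval s).1 * O leW (sval s).2)%type)
    (exist _ ((kmax f).+1, N - (kmax f).+1) (F1_idx f))
    (exist _ (F1g f) (F1g_pres f), exist _ (F1h f) (F1h_pres f)).

Section F2.
Variable s : split_union leY leW N.-1.
Let a := (sval (tag s)).1.
Let b := (sval (tag s)).2.
Let g : O leY a := (tagged s).1.
Let h : O leW b := (tagged s).2.
Lemma F2_idx : (0 < a.+1) && (0 < b) && (a.+1 + b == N).
Proof.
rewrite /a /b; case: s => [[[x y] /= /andP[/andP[_ ->]]]] /= /eqP e _.
by rewrite addSn e prednK.
Qed.
Definition F2g : {ffun Y -> 'I_a.+1} := [ffun y => inord (sval g y)].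
Lemma F2g_val y : val (F2g y) = sval g y.
Proof. by rewrite ffunE /= inordK // ltnW // ltnS. Qed.
Lemma F2g_pres : strict_pres leY F2g.
Proof. apply/spP => u v H; rewrite !F2g_val; exact: (spE (svalP g) H). Qed.
Definition F2 : split_union leY leW N :=
  existT (fun s : split_index N => (O leY (sval s).1 * O leW (sval s).2)%type)
    (exist _ (a.+1, b) F2_idx) (exist _ F2g F2g_pres, h).
End F2.

Definition F (x : (O M N + split_union leY leW N.-1)%type) : split_union leY leW N :=
  match x with inl f => F1 f | inr s => F2 s end.

Section G.
Variable s : split_union leY leW N.
Let c := (sval (tag s)).1.
Let d := (sval (tag s)).2.
Let g : O leY c := (tagged s).1.
Let h : O leW d := (tagged s).2.
Definition top := [exists y, val (sval g y) == c.-1].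
Lemma cd_prop : [/\ 0 < c, 0 < d & c + d = N].
Proof. by rewrite /c /d; case: s => [[[x y] /= /andP[/andP[-> ->] /eqP ->]]]. Qed.
Lemma Gl_lt1 y : val (sval g y) < N.
Proof. case: cd_prop => _ _ e; have := ltn_ord (sval g y); rewrite /=; lia. Qed.
Lemma Gl_lt2 w : c + val (sval h w) < N.
Proof. case: cd_prop => _ _ e; have := ltn_ord (sval h w); rewrite /=; lia. Qed.
Definition Glf : {ffun (Y + W) -> 'I_N} :=
  [ffun x => match x with inl y => Ordinal (Gl_lt1 y) | inr w => Ordinal (Gl_lt2 w) end].
Lemma Glf_pres : strict_pres M Glf.
Proof.
apply/spP => [[u|u] [v|v]] H; rewrite !ffunE /=.
- by rewrite slt_ll in H; exact: (spE (svalP g) H).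
- have := ltn_ord (sval g u); rewrite /=; lia.
- by rewrite slt_rl in H.
- by rewrite slt_rr in H; rewrite ltn_add2l; exact: (spE (svalP h) H).
Qed.
Definition Gl : O M N := exist _ Glf Glf_pres.
Hypothesis nt : top = false.
Lemma Gr_lt y : val (sval g y) < c.-1.
Proof.
have /negP : ~~ (val (sval g y) == c.-1).
  by apply/negP => e; move: nt; have -> : top by apply/existsP; exists y.
have := ltn_ord (sval g y); rewrite /=; lia.
Qed.
Lemma Gr_idx : (0 < c.-1) && (0 < d) && (c.-1 + d == N.-1).
Proof.
have := Gr_lt y0; case: cd_prop => c0 d0 e; rewrite d0 /= => H.
apply/andP; split; [|apply/eqP]; lia.
Qed.
Definition Grg : {ffun Y -> 'I_c.-1} := [ffun y => Ordinal (Gr_lt y)].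
Lemma Grg_pres : strict_pres leY Grg.
Proof. apply/spP => u v H; rewrite !ffunE /=; exact: (spE (svalP g) H). Qed.
Definition Gr : split_union leY leW N.-1 :=
  existT (fun s : split_index N.-1 => (O leY (sval s).1 * O leW (sval s).2)%type)
    (exist _ (c.-1, d) Gr_idx) (exist _ Grg Grg_pres, h).
End G.

Definition G (s : split_union leY leW N) : (O M N + split_union leY leW N.-1)%type :=
  (if top s as b return top s = b -> (O M N + split_union leY leW N.-1)%type
   then fun _ => inl (Gl s) else fun E => inr (Gr E)) (erefl (top s)).

Lemma dif_true (b : bool) T (A : b = true -> T) (B : b = false -> T) (H : b = true) :
  (if b as b' return b = b' -> T then A else B) (erefl b) = A H.
Proof. by destruct b => //; rewrite (eq_irrelevance H (erefl true)). Qed.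
Lemma dif_false (b : bool) T (A : b = true -> T) (B : b = false -> T) (H : b = false) :
  (if b as b' return b = b' -> T then A else B) (erefl b) = B H.
Proof. by destruct b => //; rewrite (eq_irrelevance H (erefl false)). Qed.

Lemma G_true s : top s -> G s = inl (Gl s).
Proof. move=> H; rewrite /G; exact: (dif_true _ _ H). Qed.
Lemma G_false s (H : top s = false) : G s = inr (Gr H).
Proof. rewrite /G; exact: (dif_false _ _ H). Qed.

Lemma kmax_Gl s : top s -> kmax (Gl s) = (sval (tag s)).1.-1.
Proof.
move=> /existsP [y /eqP e]; apply/eqP; rewrite eqn_leq; apply/andP; split.
  rewrite /kmax; apply/bigmax_leqP => z _; rewrite /= ffunE /=.
  have := ltn_ord (sval (tagged s).1 z); rewrite /=; lia.
by rewrite -e; have := kmax_ge (Gl s) y; rewrite /= ffunE.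
Qed.

Lemma FG s : F (G s) = s.
Proof.
have [c0 d0 e] := cd_prop s.
case: (boolP (top s)) => H.
- rewrite G_true //=.
- apply: su_eq => /=.
  + rewrite kmax_Gl // prednK //.
    have -> : N - (sval (tag s)).1 = (sval (tag s)).2 by lia.
    by rewrite -surjective_pairing.
  + by move=> y; rewrite F1g_val /= ffunE.
  + move=> w; rewrite F1h_val kmax_Gl // prednK //= ffunE /=; lia.
- rewrite G_false; first by apply/negbTE.
  move=> H'; apply: su_eq.
  + by rewrite /= prednK // -surjective_pairing.
  + by move=> y; rewrite F2g_val /= ffunE.
  + by [].
Qed.

Lemma GF x : G (F x) = x.
Proof.
case: x => [f|t]; rewrite /F.
- have Ht : top (F1 f).
    apply/existsP; have [y e] := kmax_att f; exists y.
    by rewrite /= F1g_val e.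
  rewrite G_true //; congr inl; apply: O_eq => -[y|w]; rewrite /= ffunE /=.
  + by have := F1g_val f y; rewrite /=.
  + have := F1h_val f w; rewrite /= => ->; have := kmax_lt f w; rewrite /=; lia.
- have Hf : top (F2 t) = false.
    apply/negbTE/existsP => -[y]; have := F2g_val t y; rewrite /= => ->.
    have := ltn_ord (sval (tagged t).1 y); rewrite /=; lia.
  rewrite (G_false Hf); congr inr; apply: su_eq.
  + by rewrite /= -surjective_pairing.
  + by move=> y; rewrite /= ffunE /=; have := F2g_val t y; rewrite /=.
  + by [].
Qed.

Lemma F_bij : bijective F.
Proof. exists G; [exact: GF | exact: FG]. Qed.

End Bij.
Section Cnt.
Variables (Y W : finType) (leY : rel Y) (leW : rel W) (y0 : Y) (w0 : W).
Definition U m := {c : 'I_m.+1 & (O leY c * O leW (m - c))%type}.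
Lemma cardU m : #|{: U m}| = \sum_(i < m.+1) Omega leY i * Omega leW (m - i).
Proof.
rewrite card_tagged sumnE big_map big_enum /=. apply: eq_bigr => i _.
rewrite card_prod !card_sig /Omega !cardsE. by [].
Qed.

Lemma Omega0 (X : finType) (x0 : X) (le : rel X) : Omega le 0 = 0.
Proof.
apply/eqP; rewrite cards_eq0; apply/eqP/setP => f; rewrite !inE.
by case: (f x0).
Qed.

Lemma sum_trim m (G : nat -> nat) : 0 < m -> G 0 = 0 -> G m = 0 ->
  \sum_(i < m.+1) G i = \sum_(1 <= i < m) G i.
Proof.
move=> m0 G0 Gm; rewrite -(big_mkord xpredT) big_nat_recr //= big_ltn //=.
by rewrite G0 Gm add0n addn0.
Qed.

Lemma cardU' m : 0 < m -> #|{: U m}| = \sum_(1 <= i < m) Omega leY i * Omega leW (m - i).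
Proof.
move=> m0; rewrite cardU (@sum_trim m (fun i => Omega leY i * Omega leW (m - i))) //.
  by rewrite (Omega0 y0).
by rewrite subnn (Omega0 w0) muln0.
Qed.

Lemma U_eq m (u1 u2 : U m) : val (tag u1) = val (tag u2) ->
  (forall y, val (sval (tagged u1).1 y) = val (sval (tagged u2).1 y)) ->
  (forall w, val (sval (tagged u1).2 w) = val (sval (tagged u2).2 w)) -> u1 = u2.
Proof.
case: u1 => [[i Hi] [[g Hg] [h Hh]]]; case: u2 => [[i' Hi'] [[g' Hg'] [h' Hh']]] /= ei.
subst i'; rewrite (bool_irrelevance Hi' Hi) => eg eh.
have eg' : g = g' by apply/ffunP => y; apply/val_inj; exact: eg.
have eh' : h = h' by apply/ffunP => y; apply/val_inj; exact: eh.
subst g' h'; by rewrite (bool_irrelevance Hg' Hg) (bool_irrelevance Hh' Hh).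
Qed.

Section Phi.
Variables (m : nat) (s : split_union leY leW m).
Let c := (sval (tag s)).1.
Let d := (sval (tag s)).2.
Lemma s_prop : [/\ 0 < c, 0 < d & c + d = m].
Proof. by rewrite /c /d; case: s => [[[x y] /= /andP[/andP[-> ->] /eqP ->]]]. Qed.
Lemma phi_c : c < m.+1.
Proof. case: s_prop => _ _ e; lia. Qed.
Lemma phi_lt w : val (sval (tagged s).2 w) < m - c.
Proof. case: s_prop => _ _ e; have := ltn_ord (sval (tagged s).2 w); rewrite /=; lia. Qed.
Definition phih : {ffun W -> 'I_(m - c)} := [ffun w => Ordinal (phi_lt w)].
Lemma phih_pres : strict_pres leW phih.
Proof. apply/spP => u v H; rewrite !ffunE /=; exact: (spE (svalP (tagged s).2) H). Qed.
Definition phi : U m :=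
  existT (fun c : 'I_m.+1 => (O leY c * O leW (m - c))%type) (Ordinal phi_c)
    ((tagged s).1, exist _ phih phih_pres).
End Phi.

Section Psi.
Variables (m : nat) (u : U m).
Lemma psi_idx : (0 < tag u) && (0 < m - tag u) && (tag u + (m - tag u) == m).
Proof.
have := O_pos y0 (tagged u).1; have := O_pos w0 (tagged u).2; have := ltn_ord (tag u).
move=> ? ? ?; apply/andP; split; [apply/andP; split|apply/eqP]; lia.
Qed.
Definition psi : split_union leY leW m :=
  existT (fun s : split_index m => (O leY (sval s).1 * O leW (sval s).2)%type)
    (exist _ (val (tag u), m - tag u) psi_idx) ((tagged u).1, (tagged u).2).
End Psi.

Lemma psiK m : cancel (@phi m) (@psi m).
Proof.
move=> s; apply: su_eq => //=.
  case: (s_prop s) => _ _ e.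
  have -> : m - (sval (tag s)).1 = (sval (tag s)).2 by lia.
  by rewrite -surjective_pairing.
by move=> w; rewrite ffunE.
Qed.
Lemma phiK m : cancel (@psi m) (@phi m).
Proof. by move=> u; apply: U_eq => // w; rewrite /= ffunE. Qed.
End Cnt.

Theorem proposition2p1 (Y W : finType) (leY : rel Y) (leW : rel W) (n : nat) :
  is_poset leY -> is_poset leW -> 0 < #|Y| -> 0 < #|W| -> 2 <= n ->
  (exists f : (O (mu leY leW) n + split_union leY leW n.-1)%type ->
              split_union leY leW n, bijective f)
  /\
  Omega (mu leY leW) n
    + \sum_(1 <= a < n.-1) Omega leY a * Omega leW (n.-1 - a)
  = \sum_(1 <= c < n) Omega leY c * Omega leW (n - c).
Proof.
move=> _ _ hY hW hn.
have [y0 _] := card_gt0P hY.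
have [w0 _] := card_gt0P hW.
have HN : 0 < n by apply: leq_trans hn.
split.
  by exists (F y0 w0 HN); exists (G y0 HN); [exact: GF | exact: FG].
pose h (x : (O (mu leY leW) n + U leY leW n.-1)%type) : U leY leW n :=
  phi (F y0 w0 HN (match x with inl f => inl f | inr u => inr (psi y0 w0 u) end)).
pose k (u : U leY leW n) : (O (mu leY leW) n + U leY leW n.-1)%type :=
  match G y0 HN (psi y0 w0 u) with inl f => inl f | inr s => inr (phi s) end.
have hb : bijective h.
  exists k.
    move=> x; rewrite /k /h psiK GF; case: x => // u; by rewrite phiK.
  move=> u; rewrite /k /h; case E: (G y0 HN (psi y0 w0 u)) => [f|s].
    by rewrite -E FG phiK.
  by rewrite psiK -E FG phiK.
have := bij_eq_card hb; rewrite card_sum !cardU' //; last by rewrite -ltnS prednK.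
by rewrite card_sig /Omega cardsE.
Qed.
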